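(* For any function $q:\mathbb{N}\to\mathbb{R}_{\ge 0}$, there exists a family of online copies-coloring instances $G^t$ such that there is no randomized online algorithm for online copies coloring that is $(\alpha, q(n))$-competitive on this family with $\alpha = o(n/\log^3 n)$, where $n$ is the number of vertices of the underlying graph $G$.
   Context: Given a graph $G=(V,E)$ and an integer $t\ge 1$, the copies graph $G^t$ has vertex set $V\times[t]$ (the $t$ copies $(v,1),\dots,(v,t)$ of each $v\in V$); two copies $(v,i)\neq(v,j)$ of the same vertex are adjacent, and copies $(u,i),(v,j)$ are adjacent whenever $(u,v)\in E$. That is, $G^t$ replaces each vertex by $K_t$ and each edge by $K_{t,t}$. A feasible coloring of $G^t$ is a proper vertex coloring, and $\chi(G^t)$ denotes its chromatic number. In online copies coloring, the vertices $v_1,\dots,v_n$ of $G$ arrive one per time step; when $v$ arrives, its edges to previously arrived vertices are revealed, the $t$ copies of $v$ are created in $G^t$ with the induced edges to previously created copies, and each of these $t$ copies must be immediately and irrevocably assigned a color so that the coloring remains proper. The algorithm may be randomized. For a function $q$, an online algorithm is $(\alpha,q(n))$-competitive if the (expected) number of colors it uses is at most $\alpha\cdot\chi(G^t)+q(n)$, where $n=|V(G)|$ (note the additive term depends only on $n$, not on $t$). *)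

(* Defs.v *)
From HB Require Import structures.
From mathcomp Require Import all_boot all_order all_algebra.
From mathcomp Require Import all_classical all_reals all_analysis.
Import Order.TTheory GRing.Theory Num.Theory.

(* The underlying graph G has vertex set 'I_n; vertex i is the (i+1)-th *)
(* vertex to arrive (arrival order = index order, w.l.o.g.).           *)
Record instance := Instance {
  inst_n : nat;
  inst_G : rel 'I_inst_n;
  inst_sym : symmetric inst_G;
  inst_irr : irreflexive inst_G;
  inst_t : nat;
  inst_t_pos : 0 < inst_t }.

Set Implicit Arguments. Unset Strict Implicit. Unset Printing Implicit Defensive.

Definition copy_adj n (G : rel 'I_n) t : rel ('I_n * 'I_t) :=
  fun x y => ((x.1 == y.1) && (x.2 != y.2)) || G x.1 y.1.
Arguments copy_adj {n} G t.

Definition proper_coloring n (G : rel 'I_n) t (T : Type)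
  (c : 'I_n * 'I_t -> T) : Prop :=
  forall x y, copy_adj G t x y -> c x <> c y.
Arguments proper_coloring {n} G t {T} c.

Definition colorable n (G : rel 'I_n) t (k : nat) : bool :=
  [exists c : {ffun 'I_n * 'I_t -> 'I_k},
    [forall x, forall y, copy_adj G t x y ==> (c x != c y)]].
Arguments colorable {n} G t k.

(* (For a loopless G, G^t is always (n*t)-colorable, so the search     *)
(* range [0, n*t] suffices; the default n*t is never reached then.)    *)
Definition chi n (G : rel 'I_n) t : nat :=
  \big[minn/(n * t)]_(k < (n * t).+1 | colorable G t k) k.
Arguments chi {n} G t.

Definition inst_chi (I : instance) : nat := chi (inst_G I) (inst_t I).

(* When vertex number k (0-based) arrives, the algorithm sees t and    *)
(* the graph revealed so far, i.e. the subgraph induced on the first   *)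
(* k+1 vertices 'I_k.+1 (the newest vertex being ord_max), given as an *)
(* adjacency table; it outputs the colors (naturals) of the t copies   *)
(* of the new vertex.  Its earlier choices are functions of earlier     *)
(* prefixes, so this captures exactly "immediate and irrevocable"      *)
(* decisions depending only on the revealed information.               *)
Definition online_alg :=
  forall (t k : nat), {ffun 'I_k.+1 * 'I_k.+1 -> bool} -> 'I_t -> nat.

Definition prefix_graph n (G : rel 'I_n) (v : 'I_n)
  : {ffun 'I_v.+1 * 'I_v.+1 -> bool} :=
  [ffun p => G (widen_ord (ltn_ord v) p.1) (widen_ord (ltn_ord v) p.2)].

Definition alg_coloring (A : online_alg) n (G : rel 'I_n) t
  (x : 'I_n * 'I_t) : nat :=
  A t x.1 (prefix_graph G x.1) x.2.
Arguments alg_coloring A {n} G t x.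

Definition valid_alg (A : online_alg) : Prop :=
  forall (I : instance),
    proper_coloring (inst_G I) (inst_t I)
      (alg_coloring A (inst_G I) (inst_t I)).

Definition ncolors (A : online_alg) (I : instance) : nat :=
  size (undup (codom (alg_coloring A (inst_G I) (inst_t I)))).

(* Main.v *)
Require Import Defs.
From HB Require Import structures.
From mathcomp Require Import all_boot all_order all_algebra.
From mathcomp Require Import all_classical all_reals all_analysis.
From mathcomp Require Import measurable_realfun.
From mathcomp Require Import lra.
Import Order.TTheory GRing.Theory Num.Theory.
Set Implicit Arguments. Unset Strict Implicit. Unset Printing Implicit Defensive.
Notation FF N m := {ffun 'I_N -> 'I_m}.
Lemma avg (N m' : nat) (v : 'I_N) (K : FF N m'.+1 -> {set 'I_m'.+1}) :
  (forall h h' : FF N m'.+1, (forall w, w != v -> h w = h' w) -> K h = K h') ->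
  (forall h, K h != [set: 'I_m'.+1]) ->
  #|FF N m'.+1| <= m'.+1 * \sum_(h : FF N m'.+1) (h v \notin K h).
Proof.
move=> Kloc KT.
pose rot (x : 'I_m'.+1) (h : FF N m'.+1) : FF N m'.+1 :=
  [ffun w => if w == v then (h w + x)%R else h w].
have rot_inj x : injective (rot x).
  move=> h1 h2 /ffunP E; apply/ffunP => w; have := E w; rewrite !ffunE.
  by case: eqP => // _ /addIr.
have Krot x h : K (rot x h) = K h.
  by apply: Kloc => w wv; rewrite ffunE (negbTE wv).
have E x : \sum_(h : FF N m'.+1) (h v \notin K h) = \sum_(h : FF N m'.+1) ((rot x h) v \notin K (rot x h)).
  by rewrite (reindex_inj (rot_inj x)).
have -> : m'.+1 * \sum_(h : FF N m'.+1) (h v \notin K h) =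
   \sum_(x : 'I_m'.+1) \sum_(h : FF N m'.+1) ((rot x h) v \notin K (rot x h)).
  by rewrite -(eq_bigr _ (fun x _ => E x)) sum_nat_const card_ord.
rewrite exchange_big /= -sum1_card; apply: leq_sum => h _.
under eq_bigr do rewrite Krot ffunE eqxx.
have : K h \proper [set: 'I_m'.+1] by rewrite properT.
case/properP => _ [y _ yK].
by rewrite (bigD1 (y - h v)%R) //= [(h v + _)%R]addrC subrK yK.
Qed.

Definition NN m := #|{ffun 'I_m -> bool}|.
Definition bitv m (v : 'I_(NN m)) : {ffun 'I_m -> bool} := enum_val v.
Lemma bitv_inj m : injective (@bitv m).
Proof. exact: enum_val_inj. Qed.
Lemma NNE m : NN m = 2 ^ m.
Proof. by rewrite /NN card_ffun card_bool card_ord. Qed.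

Definition GG m (h : FF (NN m) m) : rel 'I_(NN m) :=
  fun u w => if u < w then bitv u (h u) != bitv w (h u)
             else if w < u then bitv w (h w) != bitv u (h w) else false.
Lemma GG_sym m h : symmetric (@GG m h).
Proof. move=> u w; rewrite /GG; by case: ltngtP. Qed.
Lemma GG_irr m h : irreflexive (@GG m h).
Proof. by move=> u; rewrite /GG ltnn. Qed.

Definition Ih m h t (tp : 0 < t) : instance :=
  @Instance (NN m) (@GG m h) (@GG_sym m h) (@GG_irr m h) t tp.

Section Comb.
Variables (A : online_alg) (Avalid : valid_alg A) (m' t : nat) (tp : 0 < t).
Local Notation m := m'.+1.
Local Notation N := (NN m).
Local Notation HT := (FF N m).

Definition col (h : HT) (x : 'I_N * 'I_t) : nat := alg_coloring A (GG h) t x.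

Lemma col_proper (h : HT) x y : copy_adj (GG h) t x y -> col h x <> col h y.
Proof. move=> H; exact: (@Avalid (Ih h tp) x y H). Qed.

Lemma prefix_local (h h' : HT) (v u : 'I_N) :
  (forall w : 'I_N, w < v -> h w = h' w) -> u <= v ->
  prefix_graph (GG h) u = prefix_graph (GG h') u.
Proof.
move=> hh uv; apply/ffunP => p; rewrite !ffunE /GG /=.
have l1 := ltn_ord p.1; have l2 := ltn_ord p.2.
case: ltngtP => ab.
- by rewrite hh //= (leq_trans ab) // (leq_trans _ uv).
- by rewrite hh //= (leq_trans ab) // (leq_trans _ uv).
- by [].
Qed.

Lemma col_local (h h' : HT) (v u : 'I_N) i :
  (forall w : 'I_N, w < v -> h w = h' w) -> u <= v ->
  col h (u, i) = col h' (u, i).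
Proof. by move=> hh uv; rewrite /col /alg_coloring /= (prefix_local hh uv). Qed.

Definition Jset (h : HT) (v : 'I_N) (c : nat) : {set 'I_m} :=
  h @: [set u : 'I_N | (u < v) && [exists i : 'I_t, col h (u, i) == c]].

Lemma Jset_local (h h' : HT) (v : 'I_N) c :
  (forall w : 'I_N, w < v -> h w = h' w) -> Jset h v c = Jset h' v c.
Proof.
move=> hh; rewrite /Jset.
have -> : [set u : 'I_N | (u < v) && [exists i : 'I_t, col h (u, i) == c]] =
          [set u : 'I_N | (u < v) && [exists i : 'I_t, col h' (u, i) == c]].
  apply/setP => u; rewrite !inE; case uv: (u < v) => //=.
  by apply: eq_existsb => i; rewrite (col_local _ hh (ltnW uv)).
apply: eq_in_imset => u; rewrite inE => /andP [uv _]; exact: hh.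
Qed.

Definition growth (h : HT) (x : 'I_N * 'I_t) : bool :=
  h x.1 \notin Jset h x.1 (col h x).

Lemma Jset_notT (h : HT) (v : 'I_N) i : Jset h v (col h (v, i)) != [set: 'I_m].
Proof.
apply/negP => /eqP JT.
set S := [set u : 'I_N | (u < v) && [exists i0 : 'I_t, col h (u, i0) == col h (v, i)]].
have [u0 u0S] : exists u0, u0 \in S.
  have : ord0 \in Jset h v (col h (v, i)) by rewrite JT inE.
  by case/imsetP => u uS _; exists u.
case: (@arg_maxnP _ u0 (fun u => u \in S) (fun u : 'I_N => nat_of_ord u) u0S) => u' u'S u'max.
move: (u'S); rewrite inE => /andP [u'v /existsP [i' /eqP ci']].
have nadj u : u \in S -> u <= u' -> GG h u v = false /\ (u < u' -> GG h u u' = false).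
  rewrite inE => /andP [uv /existsP [i0 /eqP ci0]] uu'; split.
    apply/negP => G.
    have adj : copy_adj (GG h) t (u, i0) (v, i) by rewrite /copy_adj /= G orbT.
    exact: (col_proper adj ci0).
  move=> uu'2; apply/negP => G.
  have adj : copy_adj (GG h) t (u, i0) (u', i') by rewrite /copy_adj /= G orbT.
  by apply: (col_proper adj); rewrite ci0 ci'.
suff : bitv u' = bitv v.
  by move/bitv_inj => E; move: u'v; rewrite E ltnn.
apply/ffunP => j.
have : j \in Jset h v (col h (v, i)) by rewrite JT inE.
case/imsetP => u uS hj.
have uu' : u <= u' := u'max u uS.
have [G1 G2] := nadj u uS uu'.
have uv : u < v by move: uS; rewrite inE => /andP [].
move: G1; rewrite /GG uv => /negbFE/eqP b1.
have [<-|uneq] := eqVneq u u'.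
  by rewrite hj.
have uu'2 : u < u' by rewrite ltn_neqAle uneq uu'.
move: (G2 uu'2); rewrite /GG uu'2 => /negbFE/eqP b2.
by rewrite hj -b2 b1.
Qed.

Lemma growth_le (h : HT) : #|[set x | growth h x]| <= ncolors A (Ih h tp) * m.
Proof.
pose f x := (col h x, h x.1).
set S := [set x | growth h x].
have -> : ncolors A (Ih h tp) * m =
  size [seq (a, b) | a <- undup (codom (col h)), b <- enum 'I_m].
  by rewrite size_allpairs size_enum_ord.
rewrite cardE -(size_map f); apply: uniq_leq_size.
  rewrite map_inj_in_uniq ?enum_uniq // => [[v i] [v' i']].
  rewrite !mem_enum !inE /f /growth /= => gx gy [cxy hxy].
  case: (ltngtP v v') => vv'.
  - exfalso; move/negP: gy; apply; rewrite -hxy; apply: imset_f.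
    by rewrite inE vv' /=; apply/existsP; exists i; rewrite cxy.
  - exfalso; move/negP: gx; apply; rewrite hxy; apply: imset_f.
    by rewrite inE vv' /=; apply/existsP; exists i'; rewrite cxy.
  - have ev : v = v' by apply: val_inj.
    subst v'; case: (eqVneq i i') => [->//|ii'].
    exfalso; apply: (@col_proper h (v, i) (v, i')) => //.
    by rewrite /copy_adj /= eqxx ii'.
move=> p /mapP [x _ ->]; apply/allpairsP; exists (col h x, h x.1); split => //=.
  by rewrite mem_undup codom_f.
by rewrite mem_enum.
Qed.

Lemma sum_growth (v : 'I_N) (i : 'I_t) :
  #|HT| <= m * \sum_(h : HT) growth h (v, i).
Proof.
apply: (@avg N m' v (fun h => Jset h v (col h (v, i)))) => [h h' hh|h].
  have hh' : forall w : 'I_N, w < v -> h w = h' w.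
    by move=> w wv; apply: hh; rewrite neq_ltn wv.
  by rewrite (col_local _ hh' (leqnn v)) (Jset_local _ hh').
exact: Jset_notT.
Qed.

Lemma main_det : #|HT| * (N * t) <= m * m * \sum_(h : HT) ncolors A (Ih h tp).
Proof.
apply: (@leq_trans (m * \sum_(h : HT) #|[set x | growth h x]|)).
  have -> : #|HT| * (N * t) = \sum_(x : 'I_N * 'I_t) #|HT|.
    by rewrite sum_nat_const card_prod !card_ord mulnC.
  have -> : \sum_(h : HT) #|[set x | growth h x]| = \sum_(x : 'I_N * 'I_t) \sum_(h : HT) growth h x.
    rewrite exchange_big /=; apply: eq_bigr => h _.
    by rewrite -sum1dep_card /=; rewrite big_mkcond.
  rewrite big_distrr /=; apply: leq_sum => [[v i]] _; exact: sum_growth.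
rewrite -mulnA leq_mul2l; apply/orP; right.
rewrite big_distrr /=; apply: leq_sum => h _; rewrite mulnC; exact: growth_le.
Qed.

End Comb.

Lemma bigmin_le_seq (I : eqType) (r : seq I) (P : pred I) (F : I -> nat) x i0 :
  i0 \in r -> P i0 -> \big[minn/x]_(i <- r | P i) F i <= F i0.
Proof.
elim: r => //= a r IH; rewrite inE big_cons => /orP [/eqP <- -> | ir Pi].
  exact: geq_minl.
case: (P a); last exact: IH.
exact: (leq_trans (geq_minr _ _) (IH ir Pi)).
Qed.

Lemma chi_le m' (h : FF (NN m'.+1) m'.+1) t (tp : 0 < t) :
  inst_chi (Ih h tp) <= m'.+1 * 2 * t.
Proof.
set m := m'.+1.
have cK : #|{: 'I_m * bool * 'I_t}| = m * 2 * t by rewrite !card_prod !card_ord card_bool.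
have Kle : m * 2 * t < (NN m * t).+1.
  rewrite ltnS leq_mul2r; apply/orP; right.
  by rewrite NNE expnS mulnC leq_mul2l ltn_expl.
have col : colorable (GG h) t #|{: 'I_m * bool * 'I_t}|.
  apply/existsP; exists [ffun x : 'I_(NN m) * 'I_t => enum_rank (h x.1, bitv x.1 (h x.1), x.2)].
  apply/forallP => x; apply/forallP => y; apply/implyP => adj.
  rewrite !ffunE; apply/negP => /eqP/enum_rank_inj [E1 E2 E3].
  case/orP: adj => [/andP [_ x2]|].
    by rewrite E3 eqxx in x2.
  rewrite /GG; case: ltngtP => _ //.
    by rewrite E2 E1 eqxx.
  by rewrite -E2 E1 eqxx.
rewrite /inst_chi /chi /=.
rewrite cK in col.
exact: (bigmin_le_seq _ _ (mem_index_enum (Ordinal Kle)) col).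
Qed.

Local Open Scope ring_scope.
Local Open Scope classical_set_scope.
Theorem theorem2 (R : realType) (q : nat -> R) (q_ge0 : forall n, 0 <= q n) :
  exists F : set instance,
  forall (d : measure_display) (Omega : measurableType d)
         (P : probability Omega R) (A : Omega -> online_alg),
    (forall w, valid_alg (A w)) ->
    (forall I : instance,
        measurable_fun setT (fun w => (ncolors (A w) I)%:R : R)) ->
    forall alpha : nat -> R,
      alpha =o_\oo (fun n : nat => n%:R / (ln (n%:R : R)) ^+ 3) ->
      exists I : instance, F I /\
        ((alpha (inst_n I) * (inst_chi I)%:R + q (inst_n I))%:E
           < \int[P]_w ((ncolors (A w) I)%:R)%:E)%E.
Proof.
exists setT => d Omega P A Aval Ameas alpha /eqoP ao.
have ln2 : 0 < ln (2:R) by rewrite ln_gt0 // ltr1n.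
pose c : R := (ln 2)^+3 / 4.
have cpos : 0 < c by rewrite divr_gt0 // exprn_gt0.
have := ao c cpos.
case => N0 _ HN0.
pose m := N0.+1.
pose N := NN m.
have NN0 : (N0 <= N)%N.
  by rewrite /N NNE (leq_trans (leqnSn N0)) // ltnW // ltn_expl.
have Ha := HN0 N NN0.
pose x : R := (2 * (m%:R) ^+ 2 * q N) / N%:R.
have x0 : 0 <= x by rewrite /x divr_ge0 // mulr_ge0 // mulr_ge0 // exprn_ge0.
pose t := (Num.bound x).+1.
have tp : (0 < t)%N by [].
have xt : x < t%:R.
  apply: (lt_le_trans (archi_boundP x0)); by rewrite ler_nat.
case: (pselect (exists h : FF N m, ((alpha N * (inst_chi (Ih h tp))%:R + q N)%:E <
   \int[P]_w ((ncolors (A w) (Ih h tp))%:R)%:E)%E)) => [[h Hh]|nH].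
  by exists (Ih h tp).
exfalso.
have nH' : forall h : FF N m, (\int[P]_w ((ncolors (A w) (Ih h tp))%:R)%:E <=
    (`|alpha N| * (m * 2 * t)%:R + q N)%:E)%E.
  move=> h.
  have : ~ (((alpha N * (inst_chi (Ih h tp))%:R + q N)%:E <
     \int[P]_w ((ncolors (A w) (Ih h tp))%:R)%:E)%E) by move=> H; apply: nH; exists h.
  move/negP; rewrite -leNgt => hle.
  apply: (le_trans hle); rewrite lee_fin lerD2r.
  apply: (le_trans (ler_norm _)); rewrite normrM normr_nat.
  by rewrite ler_wpM2l // ler_nat chi_le.
have Hsum : (\sum_(h : FF N m) \int[P]_w ((ncolors (A w) (Ih h tp))%:R)%:E <=
    ((#|FF N m|)%:R * (`|alpha N| * (m * 2 * t)%:R + q N))%:E)%E.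
  apply: (@le_trans _ _ (\sum_(h : FF N m) ((`|alpha N| * (m*2*t)%:R + q N)%:E))%E).
    by apply: lee_sum => h _; exact: nH'.
  by rewrite sumEFin lee_fin sumr_const mulr_natl.
have Hint : (\sum_(h : FF N m) \int[P]_w ((ncolors (A w) (Ih h tp))%:R)%:E =
   \int[P]_w (\sum_(h : FF N m) ((ncolors (A w) (Ih h tp))%:R)%:E))%E.
  rewrite ge0_integral_sum //; do ?[ by move=> h; apply/measurable_EFinP; exact: Ameas
    | by move=> h w _; rewrite lee_fin ler0n ].
have Hlow : (((#|FF N m| * (N * t))%:R / (m * m)%:R)%:E <=
   \int[P]_w (\sum_(h : FF N m) ((ncolors (A w) (Ih h tp))%:R)%:E))%E.
  rewrite -[X in (X <= _)%E]mule1 -(probability_setT P) -integral_cst //.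
  apply: ge0_le_integral => //.
  - by move=> w _; rewrite lee_fin divr_ge0.
  - by apply: emeasurable_sum => h; apply/measurable_EFinP; exact: Ameas.
  move=> w _; rewrite sumEFin lee_fin -natr_sum ler_pdivrMr ?ltr0n ?muln_gt0 //.
  rewrite -natrM ler_nat [X in (_ <= X)%N]mulnC.
  exact: (@main_det (A w) (Aval w) N0 t tp).
have hlow : (#|FF N m| * (N * t))%:R / (m * m)%:R <=
    #|FF N m|%:R * (`|alpha N| * (m * 2 * t)%:R + q N) :> R.
  by rewrite -lee_fin (le_trans Hlow) // -Hint.
have Mpos : 0 < (#|FF N m|)%:R :> R by rewrite ltr0n card_ffun !card_ord expn_gt0.
have mpos : 0 < m%:R :> R by rewrite ltr0n.
have npos : 0 < N%:R :> R by rewrite ltr0n /N NNE expn_gt0.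
have tpos : 0 <= t%:R :> R by rewrite ler0n.
rewrite !natrM ler_pdivrMr ?mulr_gt0 // -[X in _ <= X]mulrA ler_pM2l // in hlow.
have lnN : ln (N%:R : R) = ln 2 * m%:R by rewrite /N NNE natrX lnXn // mulr_natr.
have nrm : `|N%:R / (ln 2 * m%:R)^+3| = N%:R / (ln 2 * m%:R)^+3 :> R.
  by rewrite ger0_norm // divr_ge0 ?ltW // exprn_gt0 // mulr_gt0.
rewrite lnN nrm in Ha.
have e2 : `|alpha N| * (4 * m%:R ^+ 3) <= N%:R.
  rewrite -ler_pdivlMr ?mulr_gt0 ?exprn_gt0 //; apply: (le_trans Ha).
  rewrite le_eqVlt; apply/orP; left; apply/eqP; rewrite /c exprMn mulf_div.
  rewrite [X in _ / X]mulrCA invfM mulrACA divff ?mul1r //.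
  by rewrite expf_neq0 // gt_eqF.
have e3 := ler_wpM2r tpos e2.
rewrite /x ltr_pdivrMr // in xt.
set a := `|alpha N| in hlow e3.
lra.
Qed.
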